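(* Let $s,y\in\mathbb{R}^n$ with $s^Ty>0$, and for $\tau\in[0,1]$ and $\alpha>0$ define $$\phi_\tau(\alpha)=\Big\|\tau\Big(\tfrac{1}{\alpha}s-y\Big)+(1-\tau)(s-\alpha y)\Big\|^2 .$$ Let $\alpha^{BB1}=\dfrac{s^Ts}{s^Ty}$ and $\alpha^{BB2}=\dfrac{s^Ty}{y^Ty}$. For each $\tau\in[0,1]$, the equation $\phi_\tau'(\alpha)=0$ has a unique root $\alpha(\tau)$ in $[\alpha^{BB2},\alpha^{BB1}]$. Then $\tau\mapsto\alpha(\tau)$ is monotone on $[0,1]$.
   Context: $\|\cdot\|$ is the Euclidean norm and $\phi_\tau'$ is the derivative of $\phi_\tau$ with respect to $\alpha$. *)

(* Defs.v *)
From HB Require Import structures.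
From mathcomp Require Import all_boot all_order all_algebra.
From mathcomp Require Import all_classical all_reals all_analysis.
Set Implicit Arguments. Unset Strict Implicit. Unset Printing Implicit Defensive.
Import Order.TTheory GRing.Theory Num.Theory.
Import numFieldNormedType.Exports.
Local Open Scope ring_scope.

Definition dotv {R : realType} {n : nat} (u v : 'rV[R]_n) : R :=
  \sum_(i < n) u 0 i * v 0 i.
Definition enorm {R : realType} {n : nat} (v : 'rV[R]_n) : R :=
  Num.sqrt (dotv v v).

Definition phi {R : realType} {n : nat} (s y : 'rV[R]_n) (tau alpha : R) : R :=
  enorm (tau *: (alpha^-1 *: s - y) + (1 - tau) *: (s - alpha *: y)) ^+ 2.

Definition alphaBB1 {R : realType} {n : nat} (s y : 'rV[R]_n) : R :=
  dotv s s / dotv s y.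
Definition alphaBB2 {R : realType} {n : nat} (s y : 'rV[R]_n) : R :=
  dotv s y / dotv y y.

(* Main.v *)
Require Import Defs.
From HB Require Import structures.
From mathcomp Require Import all_boot all_order all_algebra.
From mathcomp Require Import all_classical all_reals all_analysis.
From mathcomp Require Import ring lra.
Import Order.TTheory GRing.Theory Num.Theory.
Import numFieldNormedType.Exports.
Local Open Scope ring_scope.

Lemma dot_quad (R : realType) (n : nat) (s y : 'rV[R]_n) (p q : R) :
  dotv (p *: s - q *: y) (p *: s - q *: y) =
  p ^+ 2 * dotv s s - 2 * p * q * dotv s y + q ^+ 2 * dotv y y.
Proof.
rewrite /dotv !mulr_sumr -sumrN -!big_split /=; apply: eq_bigr => i _.
rewrite !mxE; ring.
Qed.

Lemma dot_ge0 (R : realType) (n : nat) (v : 'rV[R]_n) : 0 <= dotv v v.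
Proof. by rewrite /dotv; apply: sumr_ge0 => i _; rewrite -expr2 sqr_ge0. Qed.

Lemma phiE (R : realType) (n : nat) (s y : 'rV[R]_n) (tau x : R) :
  phi s y tau x = (tau * x^-1 + (1 - tau)) ^+ 2 * dotv s s
     - 2 * (tau * x^-1 + (1 - tau)) * (tau + (1 - tau) * x) * dotv s y
     + (tau + (1 - tau) * x) ^+ 2 * dotv y y.
Proof.
rewrite /phi /enorm sqr_sqrtr ?dot_ge0 // -dot_quad; congr dotv;
  apply/rowP => i; rewrite !mxE; ring.
Qed.
Lemma derG (R : realType) (a b c t x : R) : 0 < x ->
  derive1 (fun z : R => (t * z^-1 + (1 - t)) ^+ 2 * a
     - 2 * (t * z^-1 + (1 - t)) * (t + (1 - t) * z) * b
     + (t + (1 - t) * z) ^+ 2 * c) x =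
  2 * (1-t)^+2 * c * x + (2 * c * t * (1-t) - 2 * b * (1-t)^+2)
  - (2 * a * t^+2 * x^-1 + (2 * a * t * (1-t) - 2 * b * t^+2)) * x^-2.
Proof.
move=> x0.
set k := 1 - t.
pose p1 : {poly R} := (c * k^+2)%:P * 'X^2 + (2 * c * t * k - 2 * b * k^+2)%:P * 'X
   + (a * k^+2 - 4 * b * t * k + c * t^+2)%:P.
pose p2 : {poly R} := (a * t^+2)%:P * 'X^2 + (2 * a * t * k - 2 * b * t^+2)%:P * 'X.
have H1 := is_derive_poly p1 x.
have Hi : is_derive x (1:R) (fun z : R => z^-1) (- x ^- 2 *: 1).
  apply: is_deriveV; rewrite gt_eqF //.
have H2 := is_derive1_comp (is_derive_poly p2 (x^-1)) Hi.
have H3 := is_deriveD H1 H2.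
rewrite derive1E.
rewrite -(near_eq_derive (f := horner p1 + (horner p2 \o (fun z => z^-1)))).
  case: H3 => _ ->.
  rewrite /p1 /p2 !poly.derivE !hornerE /=.
  rewrite mulr1; field; exact: lt0r_neq0.
apply: filterS (lt_nbhsr x0) => z z0.
have -> : (horner p1 + (horner p2 \o (fun z => z^-1))) z = p1.[z] + p2.[z^-1] by [].
rewrite /p1 /p2 !(hornerD, hornerM, hornerC, hornerX, hornerXn); field; exact: lt0r_neq0.
Qed.
Definition hh {R : realType} (a b c t x : R) :=
  (1 - t) * x ^+ 2 * (c * x - b) + t * (b * x - a).

Lemma hh_mono (R : realType) (a b c t x1 x2 : R) : 0 < b -> 0 < c ->
  0 <= t <= 1 -> b <= c * x1 -> x1 < x2 -> hh a b c t x1 < hh a b c t x2.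
Proof.
move=> b0 c0 /andP[t0 t1] h1 h12.
have x10 : 0 < x1.
  by rewrite -(pmulr_rgt0 _ c0); apply: lt_le_trans h1.
have h2 : b <= c * x2 by apply: (le_trans h1); rewrite ler_pM2l // ltW.
have x20 : 0 < x2 by lra.
have e1 : b * x1 <= c * x1 * x1 by rewrite ler_pM2r.
have e2 : b * x2 <= c * x2 * x2 by rewrite ler_pM2r.
have e3 : 0 < c * x1 * x2 by rewrite !mulr_gt0.
have pos : 0 < (1 - t) * (c * (x1 * x1 + x1 * x2 + x2 * x2) - b * (x1 + x2)) + t * b.
  have : 0 <= (1 - t) * (c * (x1 * x1 + x1 * x2 + x2 * x2) - b * (x1 + x2) - c * x1 * x2).
    apply: mulr_ge0; lra.
  have : 0 <= t * b by apply: mulr_ge0; lra.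
  have : 0 < (1 - t) * (c * x1 * x2) + t * b.
    case: (ltP 0 t) => tp.
      have : 0 < t * b by apply: mulr_gt0.
      have : 0 <= (1 - t) * (c * x1 * x2) by apply: mulr_ge0; lra.
      lra.
    have -> : t = 0 by lra.
    by rewrite subr0 mul1r mul0r addr0.
  lra.
have : 0 < (x2 - x1) * ((1 - t) * (c * (x1 * x1 + x1 * x2 + x2 * x2) - b * (x1 + x2)) + t * b).
  by apply: mulr_gt0; lra.
move=> H; rewrite -subr_gt0.
suff -> : hh a b c t x2 - hh a b c t x1 = (x2 - x1) * ((1 - t) * (c * (x1 * x1 + x1 * x2 + x2 * x2) - b * (x1 + x2)) + t * b) by [].
rewrite /hh; ring.
Qed.

Lemma der_hh (R : realType) (n : nat) (s y : 'rV[R]_n) (t x : R) :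
  0 < x -> 0 <= t <= 1 ->
  (derive1 (phi s y t) x = 0 <-> hh (dotv s s) (dotv s y) (dotv y y) t x = 0).
Proof.
move=> x0 /andP[t0 t1].
have -> : phi s y t = (fun z : R => (t * z^-1 + (1 - t)) ^+ 2 * dotv s s
     - 2 * (t * z^-1 + (1 - t)) * (t + (1 - t) * z) * dotv s y
     + (t + (1 - t) * z) ^+ 2 * dotv y y).
  by apply/funext => z; rewrite phiE.
rewrite derG //.
set a := dotv s s; set b := dotv s y; set c := dotv y y.
have Q0 : 0 < t + (1 - t) * x.
  case: (ltP 0 t) => tp.
    have : 0 <= (1 - t) * x by apply: mulr_ge0; lra.
    lra.
  have -> : t = 0 by lra.
  by rewrite subr0 mul1r add0r.
have x3 : x ^+ 3 != 0 by rewrite expf_neq0 // gt_eqF.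
have -> : 2 * (1 - t) ^+ 2 * c * x + (2 * c * t * (1 - t) - 2 * b * (1 - t) ^+ 2) -
  (2 * a * t ^+ 2 * x^-1 + (2 * a * t * (1 - t) - 2 * b * t ^+ 2)) * x^-2
  = 2 * (t + (1 - t) * x) * hh a b c t x / x ^+ 3.
  by rewrite /hh; field; rewrite gt_eqF.
split => [/eqP|->]; last by rewrite mulr0 mul0r.
by rewrite !mulf_eq0 invr_eq0 (negbTE x3) (gt_eqF Q0) /= !orbF pnatr_eq0 /= => /eqP.
Qed.

Arguments hh_mono {R} a {b c t x1 x2}.
Arguments der_hh {R n s y t x}.

Theorem proposition2 (R : realType) (n : nat) (s y : 'rV[R]_n) :
  0 < dotv s y ->
  (forall tau : R, 0 <= tau <= 1 ->
     exists! a : R, alphaBB2 s y <= a <= alphaBB1 s y /\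
                    derive1 (phi s y tau) a = 0) /\
  (forall alpha : R -> R,
     (forall tau : R, 0 <= tau <= 1 ->
        alphaBB2 s y <= alpha tau <= alphaBB1 s y /\
        derive1 (phi s y tau) (alpha tau) = 0) ->
     (forall t1 t2 : R, 0 <= t1 -> t1 <= t2 -> t2 <= 1 -> alpha t1 <= alpha t2) \/
     (forall t1 t2 : R, 0 <= t1 -> t1 <= t2 -> t2 <= 1 -> alpha t2 <= alpha t1)).
Proof.
move=> b0.
have Hq := @dot_quad _ _ s y.
have a0 := @dot_ge0 _ _ s; have c0' := @dot_ge0 _ _ y.
rewrite /alphaBB1 /alphaBB2.
set a := dotv s s in Hq a0 *; set b := dotv s y in Hq b0 *;
  set c := dotv y y in Hq c0' *.
have c0 : 0 < c.
  rewrite lt_neqAle c0' andbT; apply/negP => /eqP c00.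
  have := @dot_ge0 _ _ (1 *: s - ((a + 1) / (2 * b)) *: y).
  rewrite Hq -c00 mulr0 addr0 expr1n mul1r.
  have -> : 2 * 1 * ((a + 1) / (2 * b)) * b = a + 1 by field; rewrite gt_eqF.
  lra.
have cs : b * b <= a * c.
  have := @dot_ge0 _ _ (1 *: s - (b / c) *: y).
  rewrite Hq expr1n mul1r.
  have -> : a - 2 * 1 * (b / c) * b + (b / c) ^+ 2 * c = (a * c - b * b) / c.
    by field; rewrite gt_eqF.
  move=> H; have : 0 <= (a * c - b * b) / c * c by apply: mulr_ge0 => //; exact: ltW.
  rewrite divfK ?gt_eqF //; lra.
have l0 : 0 < b / c by apply: divr_gt0.
have lr : b / c <= a / b.
  rewrite -subr_ge0.
  have -> : a / b - b / c = (a * c - b * b) / (b * c) by field; rewrite !gt_eqF.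
  by apply: divr_ge0; [lra | apply: ltW; apply: mulr_gt0].
have inI : forall x, b / c <= x <= a / b -> [/\ 0 < x, b <= c * x & b * x <= a].
  move=> x /andP[h1 h2]; split.
  - exact: lt_le_trans l0 h1.
  - by rewrite mulrC -ler_pdivrMr.
  - by rewrite mulrC -ler_pdivlMr.
have uniq : forall t x1 x2, 0 <= t <= 1 -> b / c <= x1 <= a / b -> b / c <= x2 <= a / b ->
   hh a b c t x1 = 0 -> hh a b c t x2 = 0 -> x1 = x2.
  move=> t x1 x2 ht h1 h2 e1 e2.
  have [_ i1 _] := inI _ h1; have [_ i2 _] := inI _ h2.
  apply/eqP; rewrite eq_le; apply/andP; split; rewrite leNgt; apply/negP => lt.
  - by have := hh_mono a b0 c0 ht i2 lt; rewrite e1 e2 ltxx.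
  - by have := hh_mono a b0 c0 ht i1 lt; rewrite e1 e2 ltxx.
split.
  move=> t ht.
  pose hp : {poly R} := ((1 - t) * c)%:P * 'X^3 - ((1 - t) * b)%:P * 'X^2
     + (t * b)%:P * 'X - (t * a)%:P.
  have hpE : forall x, hp.[x] = hh a b c t x.
    move=> x; rewrite /hp /hh !(hornerD, hornerN, hornerM, hornerC, hornerX, hornerXn).
    ring.
  have [z zI hz] : exists2 z, z \in `[b / c, a / b] & hp.[z] = 0.
    apply: IVT => //.
      by apply: continuous_subspaceT => z; exact: continuous_horner.
    case/andP: ht => t0 t1.
    rewrite !hpE ge_min le_max; apply/andP; split; apply/orP; [left|right].
    - rewrite /hh.
      have -> : (1 - t) * (b / c) ^+ 2 * (c * (b / c) - b) + t * (b * (b / c) - a)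
               = t * (b * b / c - a) by field; rewrite gt_eqF.
      apply: mulr_ge0_le0 => //; rewrite subr_le0 ler_pdivrMr //.
    - rewrite /hh.
      have -> : (1 - t) * (a / b) ^+ 2 * (c * (a / b) - b) + t * (b * (a / b) - a)
               = (1 - t) * (a / b) ^+ 2 * ((a * c - b * b) / b) by field; rewrite gt_eqF.
      apply: mulr_ge0; [apply: mulr_ge0; [lra|exact: sqr_ge0]|].
      by apply: divr_ge0; [lra|exact: ltW].
  move: zI; rewrite in_itv /= => zI.
  have [z0 _ _] := inI _ zI.
  exists z; split.
    by split => //; apply/(der_hh z0 ht); rewrite -hpE.
  move=> z' [z'I hz'].
  have [z'0 _ _] := inI _ z'I.
  apply: (uniq t) => //; first by rewrite -hpE.
  exact/(der_hh z'0 ht).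
move=> alpha Halpha; left => t1 t2 h1 h12 h2.
have ht1 : 0 <= t1 <= 1 by apply/andP; split => //; lra.
have ht2 : 0 <= t2 <= 1 by apply/andP; split => //; lra.
have [I1 D1] := Halpha _ ht1; have [I2 D2] := Halpha _ ht2.
have [x10 c1 b1] := inI _ I1; have [x20 c2 b2] := inI _ I2.
move/(der_hh x10 ht1): D1 => E1.
move/(der_hh x20 ht2): D2 => E2.
rewrite leNgt; apply/negP => lt.
have := hh_mono a b0 c0 ht2 c2 lt.
rewrite E2.
have -> : hh a b c t2 (alpha t1) = hh a b c t1 (alpha t1)
   + (t2 - t1) * ((b * alpha t1 - a) - alpha t1 ^+ 2 * (c * alpha t1 - b)).
  by rewrite /hh; ring.
rewrite E1 add0r.
have : 0 <= alpha t1 ^+ 2 * (c * alpha t1 - b) by apply: mulr_ge0; [exact: sqr_ge0|lra].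
have : 0 <= t2 - t1 by lra.
move=> p q; have : 0 <= (t2 - t1) * (alpha t1 ^+ 2 * (c * alpha t1 - b) - (b * alpha t1 - a)).
  by apply: mulr_ge0; lra.
move=> r.
have -> : (t2 - t1) * (b * alpha t1 - a - alpha t1 ^+ 2 * (c * alpha t1 - b)) =
  - ((t2 - t1) * (alpha t1 ^+ 2 * (c * alpha t1 - b) - (b * alpha t1 - a))) by ring.
lra.
Qed.
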